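(* Let $m$ and $n$ be positive integers and let $\alpha$ be a real number. Define \[ p_{m}(X) = \sum_{\nu=0}^{m} \binom{m-\alpha}{m-\nu}\binom{n+\alpha}{\nu} X^{\nu}, \qquad q_{n}(X) = \sum_{\nu=0}^{n} \binom{m-\alpha}{\nu}\binom{n+\alpha}{n-\nu} X^{\nu}. \] Given a complex number $x$, let $C$ denote the straight line segment from $1$ to $x$. If $0$ is not on $C$, then \[ x^{\alpha} q_{n}(x) - p_{m}(x) = \alpha \binom{m-\alpha}{m}\binom{n+\alpha}{n} \int_{C} (t-x)^{m}(1-t)^{n} t^{\alpha-m-1}\, dt. \]
   Context: For a real number $y$ and a nonnegative integer $k$, $\binom{y}{k} = y(y-1)\cdots(y-k+1)/k!$. Complex powers $x^{\alpha}$ and $t^{\alpha-m-1}$ are taken with the principal branch of the logarithm (which is continuous along $C$ when $0 \notin C$). *)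

(* Defs.v *)
From Stdlib Require Import Reals Factorial.
From Coquelicot Require Import Coquelicot.
Open Scope R_scope.

Fixpoint fallR (y : R) (k : nat) : R :=
  match k with O => 1 | S k' => fallR y k' * (y - INR k') end.
Definition binomR (y : R) (k : nat) : R := fallR y k / INR (fact k).

(* principal argument, in (-PI, PI] *)
Definition Arg (z : C) : R :=
  let a := Re z in let b := Im z in
  if Rlt_dec 0 a then atan (b / a)
  else if Rlt_dec a 0 then
         (if Rle_dec 0 b then atan (b / a) + PI else atan (b / a) - PI)
  else if Rlt_dec 0 b then PI / 2
  else if Rlt_dec b 0 then - (PI / 2) else 0.

(* principal power z^alpha = exp(alpha * Log z), Log z = ln|z| + i Arg z, z <> 0 *)
Definition Cpowr (z : C) (alpha : R) : C :=
  (exp (alpha * ln (Cmod z)) * cos (alpha * Arg z),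
   exp (alpha * ln (Cmod z)) * sin (alpha * Arg z)).

Fixpoint Cnpow (z : C) (n : nat) : C :=
  match n with O => RtoC 1 | S n' => Cmult z (Cnpow z n') end.

Fixpoint Csum (f : nat -> C) (N : nat) : C :=
  match N with O => f O | S N' => Cplus (Csum f N') (f N) end.

Definition p_poly (m n : nat) (alpha : R) (X : C) : C :=
  Csum (fun nu => Cmult (RtoC (binomR (INR m - alpha) (m - nu) *
                                binomR (INR n + alpha) nu)) (Cnpow X nu)) m.

Definition q_poly (m n : nat) (alpha : R) (X : C) : C :=
  Csum (fun nu => Cmult (RtoC (binomR (INR m - alpha) nu *
                                binomR (INR n + alpha) (n - nu))) (Cnpow X nu)) n.

Definition seg (x : C) (s : R) : C := Cplus (RtoC 1) (Cmult (RtoC s) (Cminus x (RtoC 1))).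

(* contour integral of f along the segment from 1 to x :
   int_0^1 f(1 + s (x-1)) (x-1) ds *)
Definition seg_integral (f : C -> C) (x : C) : C :=
  RInt (V := C_R_CompleteNormedModule)
       (fun s => Cmult (f (seg x s)) (Cminus x (RtoC 1))) 0 1.

(* Main.v *)
Require Import Defs.
From Stdlib Require Import Reals Lra Lia Factorial.
From Coquelicot Require Import Coquelicot.
Open Scope R_scope.

Lemma fallR_head : forall k y, fallR y (S k) = y * fallR (y - 1) k.
Proof.
  induction k; intros y; simpl.
  - ring.
  - simpl in IHk. rewrite IHk. change (match k with 0%nat => 1 | S _ => INR k + 1 end) with (INR (S k)). rewrite S_INR. ring.
Qed.

Lemma fact_pos_R : forall k, INR (fact k) <> 0.
Proof. intro k. apply not_0_INR. apply fact_neq_0. Qed.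

Lemma binomR_0 : forall y, binomR y 0 = 1.
Proof. intro y. unfold binomR. simpl. field. Qed.

Lemma binomR_B2 : forall y k, INR (S k) * binomR y (S k) = y * binomR (y - 1) k.
Proof.
  intros y k. unfold binomR. rewrite fallR_head.
  replace (fact (S k)) with (S k * fact k)%nat by reflexivity.
  rewrite mult_INR. field. split. apply fact_pos_R. apply not_0_INR; lia.
Qed.

Lemma binomR_B5 : forall y k, INR (S k) * binomR y (S k) = (y - INR k) * binomR y k.
Proof.
  intros y k. unfold binomR.
  replace (fact (S k)) with (S k * fact k)%nat by reflexivity.
  simpl fallR. rewrite mult_INR. field. split. apply fact_pos_R. apply not_0_INR; lia.
Qed.

Lemma binomR_B3 : forall y k, (y - INR k) * binomR y k = y * binomR (y - 1) k.
Proof. intros. rewrite <- binomR_B5, binomR_B2. reflexivity. Qed.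

Lemma vandermonde : forall N a b,
  sum_f_R0 (fun v => binomR a v * binomR b (N - v)) N = binomR (a + b) N.
Proof.
  induction N; intros a b.
  - simpl. rewrite !binomR_0. ring.
  - apply Rmult_eq_reg_l with (INR (S N)); [| apply not_0_INR; lia].
    rewrite binomR_B2.
    (* split N+1 = v + (N+1-v) *)
    transitivity (sum_f_R0 (fun v => INR v * binomR a v * binomR b (S N - v)) (S N)
                 + sum_f_R0 (fun v => INR (S N - v) * binomR a v * binomR b (S N - v)) (S N)).
    { rewrite scal_sum, <- plus_sum. apply sum_eq. intros i Hi.
      rewrite minus_INR by lia. ring. }
    replace (a + b - 1) with ((a - 1) + b) by ring.
    rewrite Rmult_plus_distr_r.
    f_equal.
    + rewrite <- (IHN (a-1) b), scal_sum.
      rewrite decomp_sum by lia. simpl pred. rewrite Rmult_0_l, !Rmult_0_l, Rplus_0_l.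
      apply sum_eq. intros i Hi.
      replace (S N - S i)%nat with (N - i)%nat by lia.
      rewrite binomR_B2. ring.
    + replace (a - 1 + b) with (a + (b - 1)) by ring.
      rewrite <- (IHN a (b-1)), scal_sum.
      rewrite tech5. rewrite Nat.sub_diag. simpl INR. rewrite !Rmult_0_l, Rplus_0_r.
      apply sum_eq. intros i Hi.
      replace (S N - i)%nat with (S (N - i))%nat by lia.
      replace (INR match i with 0 => S N | S l => N - l end) with (INR (S (N - i))) by (f_equal; destruct i; lia).
      transitivity (binomR a i * (INR (S (N-i)) * binomR b (S (N-i)))); [ring|]. rewrite binomR_B2. ring.
Qed.

Lemma fallR_add : forall b a y, fallR y (a + b) = fallR y a * fallR (y - INR a) b.
Proof.
  induction b; intros a y.
  - rewrite Nat.add_0_r. simpl. ring.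
  - rewrite Nat.add_succ_r. simpl. rewrite IHb, plus_INR. ring.
Qed.

Lemma fallR_refl : forall k z, fallR (- z) k = (-1) ^ k * fallR (z + INR k - 1) k.
Proof.
  induction k; intros z.
  - simpl. ring.
  - rewrite (fallR_head k (z + INR (S k) - 1)). change (fallR (-z) (S k)) with (fallR (-z) k * (-z - INR k)). rewrite IHk.
    replace (z + INR (S k) - 1 - 1) with (z + INR k - 1) by (rewrite S_INR; ring).
    rewrite S_INR. simpl pow. ring.
Qed.

Lemma fallR_nat : forall k N, (k <= N)%nat ->
  fallR (INR N) k = INR (fact N) / INR (fact (N - k)).
Proof.
  induction k; intros N Hk.
  - simpl. rewrite Nat.sub_0_r. field. apply fact_pos_R.
  - simpl fallR. rewrite IHk by lia.
    replace (N - k)%nat with (S (N - S k)) by lia.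
    replace (fact (S (N - S k))) with (S (N - S k) * fact (N - S k))%nat by reflexivity.
    rewrite mult_INR. replace (INR N - INR k) with (INR (S (N - S k))).
    + field. split. apply fact_pos_R. apply not_0_INR; lia.
    + rewrite S_INR, minus_INR by lia. rewrite S_INR. ring.
Qed.

Lemma binomR_nat : forall N k, (k <= N)%nat -> binomR (INR N) k = Binomial.C N k.
Proof.
  intros N k Hk. unfold binomR, Binomial.C. rewrite fallR_nat by exact Hk.
  field. split; apply fact_pos_R.
Qed.

Lemma binomR_sym : forall N k, (k <= N)%nat -> binomR (INR N) k = binomR (INR N) (N - k).
Proof.
  intros N k Hk. rewrite !binomR_nat by lia. apply pascal_step1. exact Hk.
Qed.

Lemma base_coef : forall n v a, (v <= n)%nat ->
  binomR (- a) v * binomR (INR n + a - 1) (n - v)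
  = (-1) ^ v * Binomial.C n v * binomR (INR n + a - 1) n.
Proof.
  intros n v a Hv. unfold binomR, Binomial.C.
  rewrite fallR_refl.
  assert (H : fallR (INR n + a - 1) n = fallR (INR n + a - 1) (n - v) * fallR (INR n + a - 1 - INR (n - v)) v)
    by (rewrite <- fallR_add; f_equal; lia).
  rewrite H. rewrite minus_INR by exact Hv.
  replace (INR n + a - 1 - (INR n - INR v)) with (a + INR v - 1) by ring.
  field. split; [apply fact_pos_R|]. split; apply fact_pos_R.
Qed.

Lemma isd_eq : forall (f : R -> R) (x l l' : R), is_derive f x l -> l = l' -> is_derive f x l'.
Proof. intros; subst; auto. Qed.

Lemma isd_plus : forall f g x a b, is_derive f x a -> is_derive g x b ->
  is_derive (fun t => f t + g t) x (a + b).
Proof. intros. exact (is_derive_plus f g x a b H H0). Qed.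

Lemma isd_minus : forall f g x a b, is_derive f x a -> is_derive g x b ->
  is_derive (fun t => f t - g t) x (a - b).
Proof. intros. exact (is_derive_minus f g x a b H H0). Qed.

Lemma isd_mult : forall f g x a b, is_derive f x a -> is_derive g x b ->
  is_derive (fun t => f t * g t) x (a * g x + f x * b).
Proof. intros. exact (Derive.is_derive_mult f g x a b H H0). Qed.

Lemma isd_const : forall (c : R) x, is_derive (fun _ => c) x 0.
Proof. intros. apply (is_derive_const c x). Qed.

Lemma isd_id : forall x, is_derive (fun t : R => t) x 1.
Proof. intros. apply (is_derive_id x). Qed.

Definition CD (f : R -> C) (x : R) (l : C) :=
  is_derive (fun t => fst (f t)) x (fst l) /\ is_derive (fun t => snd (f t)) x (snd l).

Lemma CD_ext : forall f g x l, (forall t, f t = g t) -> CD f x l -> CD g x l.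
Proof.
  intros f g x l H [H1 H2]. split.
  - eapply is_derive_ext; [|exact H1]. intros t; simpl; rewrite H; auto.
  - eapply is_derive_ext; [|exact H2]. intros t; simpl; rewrite H; auto.
Qed.

Lemma CD_eq : forall f x l l', CD f x l -> l = l' -> CD f x l'.
Proof. intros; subst; auto. Qed.

Lemma CD_const : forall (c : C) x, CD (fun _ => c) x (RtoC 0).
Proof. intros. split; apply isd_const. Qed.

Lemma CD_plus : forall f g x a b, CD f x a -> CD g x b ->
  CD (fun t => Cplus (f t) (g t)) x (Cplus a b).
Proof. intros f g x a b [H1 H2] [H3 H4]. split; simpl; apply isd_plus; auto. Qed.

Lemma CD_minus : forall f g x a b, CD f x a -> CD g x b ->
  CD (fun t => Cminus (f t) (g t)) x (Cminus a b).
Proof.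
  intros f g x a b [H1 H2] [H3 H4]. split.
  - apply (is_derive_ext (fun t => fst (f t) - fst (g t))). intro t; simpl; ring.
    eapply isd_eq; [apply isd_minus; eauto | simpl; ring].
  - apply (is_derive_ext (fun t => snd (f t) - snd (g t))). intro t; simpl; ring.
    eapply isd_eq; [apply isd_minus; eauto | simpl; ring].
Qed.

Lemma CD_mult : forall f g x a b, CD f x a -> CD g x b ->
  CD (fun t => Cmult (f t) (g t)) x (Cplus (Cmult a (g x)) (Cmult (f x) b)).
Proof.
  intros f g x a b [H1 H2] [H3 H4]. split.
  - apply (is_derive_ext (fun t => fst (f t) * fst (g t) - snd (f t) * snd (g t))). intro t; simpl; ring.
    eapply isd_eq; [apply isd_minus; apply isd_mult; eauto | simpl; ring].
  - apply (is_derive_ext (fun t => fst (f t) * snd (g t) + snd (f t) * fst (g t))). intro t; simpl; ring.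
    eapply isd_eq; [apply isd_plus; apply isd_mult; eauto | simpl; ring].
Qed.

Lemma CD_RtoC : forall f x a, is_derive f x a -> CD (fun t => RtoC (f t)) x (RtoC a).
Proof. intros. split; simpl; auto. apply isd_const. Qed.

Lemma CD_seg : forall z x, CD (seg z) x (Cminus z (RtoC 1)).
Proof.
  intros z x. split.
  - apply (is_derive_ext (fun t => 1 + t * (fst z - 1))). intro t; simpl; ring.
    eapply isd_eq; [apply isd_plus; [apply isd_const | apply isd_mult; [apply isd_id|apply isd_const]] | simpl; ring].
  - apply (is_derive_ext (fun t => t * snd z)). intro t; simpl; ring.
    eapply isd_eq; [apply isd_mult; [apply isd_id|apply isd_const] | simpl; ring].
Qed.

Lemma CD_Csum : forall N (F : nat -> R -> C) dF x, (forall v, CD (F v) x (dF v)) ->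
  CD (fun t => Csum (fun v => F v t) N) x (Csum dF N).
Proof.
  induction N; intros F dF x H; simpl.
  - apply H.
  - apply CD_plus. apply IHN. exact H. apply H.
Qed.

Lemma CD_Cnpow : forall k f x a, CD f x a ->
  CD (fun t => Cnpow (f t) k) x (Cmult (RtoC (INR k)) (Cmult a (Cnpow (f x) (pred k)))).
Proof.
  induction k; intros f x a H.
  - apply (CD_ext (fun _ => RtoC 1)). intro t; reflexivity.
    apply (CD_eq _ _ (RtoC 0)). apply CD_const.
    change (INR 0) with 0. apply injective_projections; simpl; ring.
  - apply (CD_ext (fun t => Cmult (f t) (Cnpow (f t) k))). intro t; reflexivity.
    apply (CD_eq _ _ _ _ (CD_mult _ _ _ _ _ H (IHk f x a H))).
    destruct k.
    + change (INR 1) with 1. change (INR 0) with 0. change (pred 1) with 0%nat.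
      change (Cnpow (f x) 0) with (RtoC 1). ring.
    + change (pred (S (S k))) with (S k). change (pred (S k)) with k.
      change (Cnpow (f x) (S k)) with (Cmult (f x) (Cnpow (f x) k)).
      rewrite (S_INR (S k)). rewrite RtoC_plus. ring.
Qed.

Definition good (z : C) := 0 < fst z \/ snd z <> 0.

Lemma Arg_apos : forall z, 0 < fst z -> Arg z = atan (snd z / fst z).
Proof. intros z H. unfold Arg, Re, Im. destruct (Rlt_dec 0 (fst z)); [auto|lra]. Qed.

Lemma atan_inv_neg : forall x, x < 0 -> atan (/ x) = - (PI / 2) - atan x.
Proof.
  intros x Hx. replace (/ x) with (- / (- x)) by (field; lra).
  rewrite atan_opp, atan_inv by lra. rewrite atan_opp. ring.
Qed.

Lemma Arg_bpos : forall z, 0 < snd z -> Arg z = PI / 2 - atan (fst z / snd z).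
Proof.
  intros z H. unfold Arg, Re, Im.
  destruct (Rlt_dec 0 (fst z)).
  - replace (snd z / fst z) with (/ (fst z / snd z)) by (field; lra).
    apply atan_inv. apply Rdiv_lt_0_compat; lra.
  - destruct (Rlt_dec (fst z) 0).
    + destruct (Rle_dec 0 (snd z)); [|lra].
      replace (snd z / fst z) with (/ (fst z / snd z)) by (field; lra).
      rewrite atan_inv_neg. lra. apply Rdiv_neg_pos; lra.
    + destruct (Rlt_dec 0 (snd z)); [|lra].
      replace (fst z) with 0 by lra. unfold Rdiv. rewrite Rmult_0_l, atan_0. ring.
Qed.

Lemma Arg_bneg : forall z, snd z < 0 -> Arg z = - (PI / 2) - atan (fst z / snd z).
Proof.
  intros z H. unfold Arg, Re, Im.
  destruct (Rlt_dec 0 (fst z)).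
  - replace (snd z / fst z) with (/ (fst z / snd z)) by (field; lra).
    apply atan_inv_neg. apply Rdiv_pos_neg; lra.
  - destruct (Rlt_dec (fst z) 0).
    + destruct (Rle_dec 0 (snd z)); [lra|].
      replace (snd z / fst z) with (/ (fst z / snd z)) by (field; lra).
      rewrite atan_inv. lra. apply Rdiv_neg_neg; lra.
    + destruct (Rlt_dec 0 (snd z)); [lra|].
      destruct (Rlt_dec (snd z) 0); [|lra].
      replace (fst z) with 0 by lra. unfold Rdiv. rewrite Rmult_0_l, atan_0. ring.
Qed.

Lemma sqrt_factor : forall c d, d <> 0 ->
  sqrt (c ^ 2 + d ^ 2) = Rabs d * sqrt (1 + (c / d)²).
Proof.
  intros c d Hd.
  replace (c ^ 2 + d ^ 2) with (Rsqr d * (1 + (c / d)²)) by (unfold Rsqr; field; auto).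
  rewrite sqrt_mult. rewrite sqrt_Rsqr_abs. auto.
  apply Rle_0_sqr. pose proof (Rle_0_sqr (c/d)); lra.
Qed.

Lemma polar : forall z, good z ->
  Cmod z * cos (Arg z) = fst z /\ Cmod z * sin (Arg z) = snd z.
Proof.
  intros z Hz. unfold Cmod.
  assert (Hs : forall t, 0 < sqrt (1 + t²)).
  { intro t. apply sqrt_lt_R0. pose proof (Rle_0_sqr t); lra. }
  destruct (Rlt_dec 0 (fst z)) as [Ha|Ha].
  - rewrite Arg_apos by auto. rewrite Rplus_comm, sqrt_factor by lra.
    rewrite cos_atan, sin_atan. rewrite Rabs_right by lra.
    pose proof (Hs (snd z / fst z)). split; field; lra.
  - destruct Hz as [Hz|Hz]; [lra|].
    rewrite sqrt_factor by auto. pose proof (Hs (fst z / snd z)).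
    destruct (Rlt_dec 0 (snd z)).
    + rewrite Arg_bpos by auto. rewrite cos_minus, sin_minus, cos_PI2, sin_PI2, cos_atan, sin_atan.
      rewrite Rabs_right by lra. split; field; lra.
    + rewrite Arg_bneg by lra.
      replace (- (PI / 2) - atan (fst z / snd z)) with (- (PI/2 + atan (fst z / snd z))) by ring.
      rewrite cos_neg, sin_neg, cos_plus, sin_plus, cos_PI2, sin_PI2, cos_atan, sin_atan.
      rewrite Rabs_left by lra. split; field; lra.
Qed.

Lemma Cmod_good_pos : forall z, good z -> 0 < Cmod z.
Proof.
  intros z Hz. unfold Cmod. apply sqrt_lt_R0.
  destruct Hz as [H|H].
  - pose proof (pow2_ge_0 (snd z)). assert (0 < fst z ^ 2) by (apply pow_lt; auto). lra.
  - pose proof (pow2_ge_0 (fst z)). assert (0 < snd z ^ 2).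
    { replace (snd z ^ 2) with (Rsqr (snd z)) by (unfold Rsqr; ring). apply Rlt_0_sqr; auto. }
    lra.
Qed.

Lemma Cpowr_succ : forall z a, good z -> Cpowr z (a + 1) = Cmult z (Cpowr z a).
Proof.
  intros z a Hz. destruct (polar z Hz) as [H1 H2].
  pose proof (Cmod_good_pos z Hz) as Hm.
  unfold Cpowr.
  replace ((a + 1) * ln (Cmod z)) with (a * ln (Cmod z) + ln (Cmod z)) by ring.
  replace ((a + 1) * Arg z) with (a * Arg z + Arg z) by ring.
  rewrite exp_plus, exp_ln by auto. rewrite cos_plus, sin_plus.
  apply injective_projections; simpl; rewrite <- H1, <- H2; ring.
Qed.

Lemma isd_ext : forall (f g : R -> R) x l, (forall t, f t = g t) -> is_derive f x l -> is_derive g x l.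
Proof. intros. eapply is_derive_ext; eauto. Qed.
Lemma isd_ext_loc : forall (f g : R -> R) x l, locally x (fun t => f t = g t) -> is_derive f x l -> is_derive g x l.
Proof. intros. eapply is_derive_ext_loc; eauto. Qed.

Lemma isd_comp : forall (f g : R -> R) x df dg, is_derive f (g x) df -> is_derive g x dg ->
  is_derive (fun t => f (g t)) x (dg * df).
Proof. intros. exact (is_derive_comp f g x df dg H H0). Qed.

Lemma lin_pos_loc : forall c d r, 0 < c + r * d -> locally r (fun t => 0 < c + t * d).
Proof.
  intros c d r H.
  assert (Hc : continuous (fun t => c + t * d) r).
  { apply (ex_derive_continuous (fun t : R => c + t * d)). auto_derive; auto. }
  apply (Hc (fun y => 0 < y)). apply open_gt. exact H.
Qed.

Lemma lin_neg_loc : forall c d r, c + r * d < 0 -> locally r (fun t => c + t * d < 0).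
Proof.
  intros c d r H.
  assert (Hc : continuous (fun t => c + t * d) r).
  { apply (ex_derive_continuous (fun t : R => c + t * d)). auto_derive; auto. }
  apply (Hc (fun y => y < 0)). apply open_lt. exact H.
Qed.

Lemma alg1 : forall al E0 c0 s0 Q1 Q2 A B a1 b1, 0 < A ^ 2 + B ^ 2 ->
  E0 * c0 = A * Q1 - B * Q2 -> E0 * s0 = A * Q2 + B * Q1 ->
  al * ((A * a1 + B * b1) / (A ^ 2 + B ^ 2)) * E0 * c0 +
  E0 * (al * ((A * b1 - B * a1) / (A ^ 2 + B ^ 2)) * - s0) = al * (a1 * Q1 - b1 * Q2).
Proof.
  intros. replace (al * ((A * a1 + B * b1) / (A ^ 2 + B ^ 2)) * E0 * c0 +
  E0 * (al * ((A * b1 - B * a1) / (A ^ 2 + B ^ 2)) * - s0)) with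
  (al * ((A * a1 + B * b1) / (A ^ 2 + B ^ 2)) * (E0 * c0) -
   al * ((A * b1 - B * a1) / (A ^ 2 + B ^ 2)) * (E0 * s0)) by ring.
  rewrite H0, H1. field. lra.
Qed.

Lemma alg2 : forall al E0 c0 s0 Q1 Q2 A B a1 b1, 0 < A ^ 2 + B ^ 2 ->
  E0 * c0 = A * Q1 - B * Q2 -> E0 * s0 = A * Q2 + B * Q1 ->
  al * ((A * a1 + B * b1) / (A ^ 2 + B ^ 2)) * E0 * s0 +
  E0 * (al * ((A * b1 - B * a1) / (A ^ 2 + B ^ 2)) * c0) = al * (a1 * Q2 + b1 * Q1).
Proof.
  intros. replace (al * ((A * a1 + B * b1) / (A ^ 2 + B ^ 2)) * E0 * s0 +
  E0 * (al * ((A * b1 - B * a1) / (A ^ 2 + B ^ 2)) * c0)) with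
  (al * ((A * a1 + B * b1) / (A ^ 2 + B ^ 2)) * (E0 * s0) +
   al * ((A * b1 - B * a1) / (A ^ 2 + B ^ 2)) * (E0 * c0)) by ring.
  rewrite H0, H1. field. lra.
Qed.

Section Seg.
Variable x : C.
Let a1 := fst x - 1.
Let b1 := snd x.

Lemma seg_fst : forall t, fst (seg x t) = 1 + t * a1.
Proof. intro t. unfold seg, a1. simpl. ring. Qed.
Lemma seg_snd : forall t, snd (seg x t) = 0 + t * b1.
Proof. intro t. unfold seg, b1. simpl. ring. Qed.

Lemma isd_L : forall r, good (seg x r) ->
  is_derive (fun t => ln (Cmod (seg x t))) r
   ((fst (seg x r) * a1 + snd (seg x r) * b1) / (fst (seg x r) ^ 2 + snd (seg x r) ^ 2)).
Proof.
  intros r Hg. pose proof (Cmod_good_pos _ Hg) as Hm. unfold Cmod in Hm.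
  rewrite seg_fst, seg_snd in *.
  assert (Hp : 0 < (1 + r * a1) ^ 2 + (0 + r * b1) ^ 2).
  { apply sqrt_lt_0_alt. rewrite sqrt_0. auto. }
  apply (isd_ext (fun t => ln (sqrt ((1 + t * a1) ^ 2 + (0 + t * b1) ^ 2)))).
  { intro t. unfold Cmod. rewrite seg_fst, seg_snd. auto. }
  eapply isd_eq. auto_derive.
  - repeat split; try nra. apply sqrt_lt_R0; nra.
  - reflexivity.
  - set (E := (1 + r * a1) * ((1 + r * a1) * 1) + (0 + r * b1) * ((0 + r * b1) * 1)).
    assert (HE : sqrt E * sqrt E = E) by (apply sqrt_sqrt; unfold E; nra).
    assert (HS : 0 < sqrt E) by (apply sqrt_lt_R0; unfold E; nra).
    replace ((1 + r*a1)^2 + (0 + r*b1)^2) with (sqrt E * sqrt E) by (rewrite HE; unfold E; ring).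
    field. lra.
Qed.

Lemma isd_Arg : forall r, good (seg x r) ->
  is_derive (fun t => Arg (seg x t)) r
   ((fst (seg x r) * b1 - snd (seg x r) * a1) / (fst (seg x r) ^ 2 + snd (seg x r) ^ 2)).
Proof.
  intros r Hg. pose proof (Cmod_good_pos _ Hg) as Hm. unfold Cmod in Hm.
  assert (Hp : 0 < fst (seg x r) ^ 2 + snd (seg x r) ^ 2).
  { apply sqrt_lt_0_alt. rewrite sqrt_0. auto. }
  rewrite seg_fst, seg_snd in *.
  destruct (Rlt_dec 0 (1 + r * a1)) as [Ha|Ha].
  - apply (isd_ext_loc (fun t => atan ((0 + t * b1) / (1 + t * a1)))).
    { generalize (lin_pos_loc 1 a1 r Ha). apply filter_imp. intros t Ht.
      rewrite Arg_apos; rewrite ?seg_fst, ?seg_snd; auto. }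
    eapply isd_eq. auto_derive. lra. reflexivity. field; repeat split; try nra; lra.
  - destruct Hg as [Hg|Hg]; rewrite ?seg_fst, ?seg_snd in Hg; [lra|].
    destruct (Rlt_dec 0 (0 + r * b1)) as [Hb|Hb].
    + apply (isd_ext_loc (fun t => PI / 2 - atan ((1 + t * a1) / (0 + t * b1)))).
      { generalize (lin_pos_loc 0 b1 r Hb). apply filter_imp. intros t Ht.
        rewrite Arg_bpos; rewrite ?seg_fst, ?seg_snd; auto. }
      eapply isd_eq. auto_derive. lra. reflexivity. field; repeat split; try nra; lra.
    + assert (Hb' : 0 + r * b1 < 0) by lra.
      apply (isd_ext_loc (fun t => - (PI / 2) - atan ((1 + t * a1) / (0 + t * b1)))).
      { generalize (lin_neg_loc 0 b1 r Hb'). apply filter_imp. intros t Ht.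
        rewrite Arg_bneg; rewrite ?seg_fst, ?seg_snd; auto. }
      eapply isd_eq. auto_derive. lra. reflexivity. field; repeat split; try nra; lra.
Qed.

Lemma CD_Cpowr : forall r al, good (seg x r) ->
  CD (fun t => Cpowr (seg x t) al) r
     (Cmult (RtoC al) (Cmult (Cminus x (RtoC 1)) (Cpowr (seg x r) (al - 1)))).
Proof.
  intros r al Hg.
  pose proof (Cpowr_succ (seg x r) (al - 1) Hg) as HP.
  replace (al - 1 + 1) with al in HP by ring.
  set (Q := Cpowr (seg x r) (al - 1)) in *.
  pose proof (isd_L r Hg) as HL. pose proof (isd_Arg r Hg) as HA.
  set (L' := (fst (seg x r) * a1 + snd (seg x r) * b1) / (fst (seg x r) ^ 2 + snd (seg x r) ^ 2)) in *.
  set (A' := (fst (seg x r) * b1 - snd (seg x r) * a1) / (fst (seg x r) ^ 2 + snd (seg x r) ^ 2)) in *.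
  assert (HN : 0 < fst (seg x r) ^ 2 + snd (seg x r) ^ 2).
  { pose proof (Cmod_good_pos _ Hg) as Hm. unfold Cmod in Hm.
    apply sqrt_lt_0_alt. rewrite sqrt_0. auto. }
  assert (Hexp : forall y, is_derive exp y (exp y)).
  { intro y. apply is_derive_Reals. apply derivable_pt_lim_exp. }
  assert (Hcos : forall y, is_derive cos y (- sin y)).
  { intro y. apply is_derive_Reals. apply derivable_pt_lim_cos. }
  assert (Hsin : forall y, is_derive sin y (cos y)).
  { intro y. apply is_derive_Reals. apply derivable_pt_lim_sin. }
  assert (HE : is_derive (fun t => exp (al * ln (Cmod (seg x t)))) r
                 ((al * L') * exp (al * ln (Cmod (seg x r))))).
  { apply (isd_comp exp (fun t => al * ln (Cmod (seg x t)))). apply Hexp.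
    apply is_derive_scal. exact HL. }
  assert (HC : is_derive (fun t => cos (al * Arg (seg x t))) r
                 ((al * A') * - sin (al * Arg (seg x r)))).
  { apply (isd_comp cos (fun t => al * Arg (seg x t))). apply Hcos.
    apply is_derive_scal. exact HA. }
  assert (HS : is_derive (fun t => sin (al * Arg (seg x t))) r
                 ((al * A') * cos (al * Arg (seg x r)))).
  { apply (isd_comp sin (fun t => al * Arg (seg x t))). apply Hsin.
    apply is_derive_scal. exact HA. }
  assert (HP1 : exp (al * ln (Cmod (seg x r))) * cos (al * Arg (seg x r))
                = fst (seg x r) * fst Q - snd (seg x r) * snd Q).
  { change (exp (al * ln (Cmod (seg x r))) * cos (al * Arg (seg x r))) with (fst (Cpowr (seg x r) al)).
    rewrite HP. reflexivity. }
  assert (HP2 : exp (al * ln (Cmod (seg x r))) * sin (al * Arg (seg x r))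
                = fst (seg x r) * snd Q + snd (seg x r) * fst Q).
  { change (exp (al * ln (Cmod (seg x r))) * sin (al * Arg (seg x r))) with (snd (Cpowr (seg x r) al)).
    rewrite HP. simpl. ring. }
  clearbody Q. unfold L', A' in *.
  split.
  - eapply isd_eq. apply (isd_mult _ _ _ _ _ HE HC).
    replace (fst (Cmult (RtoC al) (Cmult (Cminus x (RtoC 1)) Q))) with (al * (a1 * fst Q - b1 * snd Q))
      by (unfold a1, b1; simpl; ring).
    apply alg1; auto.
  - eapply isd_eq. apply (isd_mult _ _ _ _ _ HE HS).
    replace (snd (Cmult (RtoC al) (Cmult (Cminus x (RtoC 1)) Q))) with (al * (a1 * snd Q + b1 * fst Q))
      by (unfold a1, b1; simpl; ring).
    apply alg2; auto.
Qed.

End Seg.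

Lemma isd_cont : forall (f : R -> R) x l, is_derive f x l -> continuity_pt f x.
Proof.
  intros f x l H. apply continuity_pt_filterlim.
  apply (ex_derive_continuous f x). exists l; exact H.
Qed.

Lemma cont_cont : forall (f : R -> R) x, continuity_pt f x -> continuous f x.
Proof. intros. apply continuity_pt_filterlim. auto. Qed.

Lemma isd_pow_lin : forall m y x,
  is_derive (fun t => (t - y) ^ m) x (INR m * (x - y) ^ (pred m)).
Proof.
  intros m y x. auto_derive. auto. unfold Rminus; rewrite Rmult_1_l; reflexivity.
Qed.


Lemma isd_pow_lin2 : forall m t x,
  is_derive (fun y => (t - y) ^ (S m)) x (- INR (S m) * (t - x) ^ m).
Proof.
  intros m t x. auto_derive. auto.
  change (match m with 0%nat => 1 | S _ => INR m + 1 end) with (INR (S m)). unfold Rminus. ring.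
Qed.


Section D.
Variable psi : R -> R.
Hypothesis Hpsi : forall u, continuity_pt psi u.

Definition Dm (m : nat) (r : R) := RInt (fun u => (u - r) ^ m * psi u) 0 r.

Lemma cont_integrand : forall m y u, continuity_pt (fun t => (t - y) ^ m * psi t) u.
Proof.
  intros. apply continuity_pt_mult. eapply isd_cont. apply isd_pow_lin. apply Hpsi.
Qed.

Lemma exRInt_integrand : forall m y a b, ex_RInt (fun t => (t - y) ^ m * psi t) a b.
Proof.
  intros. apply (ex_RInt_continuous (V:=R_CompleteNormedModule)). intros z _. apply cont_cont. apply cont_integrand.
Qed.

Lemma Dm_deriv0 : forall r, is_derive (Dm 0) r (psi r).
Proof.
  intros r.
  apply (is_derive_ext (fun r => RInt psi 0 r)).
  { intro t. unfold Dm. apply RInt_ext. intros; simpl; ring. }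
  apply (is_derive_RInt psi (fun r => RInt psi 0 r) 0 r).
  - apply filter_forall. intro b. apply (RInt_correct (V:=R_CompleteNormedModule)). apply (ex_RInt_continuous (V:=R_CompleteNormedModule)).
    intros; apply cont_cont; auto.
  - apply cont_cont; auto.
Qed.

Lemma cont2d_pow : forall m x y, continuity_2d_pt (fun u v => (v - u) ^ m) x y.
Proof.
  induction m; intros x y; simpl.
  - apply continuity_2d_pt_const.
  - apply continuity_2d_pt_mult; auto.
    apply continuity_2d_pt_minus. apply continuity_2d_pt_id2. apply continuity_2d_pt_id1.
Qed.

Lemma Derive_integrand : forall m u v,
  Derive (fun z => (v - z) ^ (S m) * psi v) u = - INR (S m) * (v - u) ^ m * psi v.
Proof.
  intros. apply is_derive_unique.
  apply (isd_ext (fun z => psi v * (v - z) ^ (S m))). intro; ring.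
  eapply isd_eq. apply is_derive_scal. apply isd_pow_lin2. simpl; ring.
Qed.

Lemma Dm_derivS : forall m r, is_derive (Dm (S m)) r (- INR (S m) * Dm m r).
Proof.
  intros m r. unfold Dm.
  assert (Hc2 : forall x t, continuity_2d_pt
      (fun u v => Derive (fun z => (v - z) ^ (S m) * psi v) u) x t).
  { intros x t. apply (continuity_2d_pt_ext (fun u v => - INR (S m) * (v - u) ^ m * psi v)).
    intros; rewrite Derive_integrand; auto.
    apply continuity_2d_pt_mult. apply continuity_2d_pt_mult.
    apply continuity_2d_pt_const. apply cont2d_pow.
    apply (continuity_1d_2d_pt_comp psi (fun _ v => v)). apply Hpsi. apply continuity_2d_pt_id2. }
  pose proof (is_derive_RInt_param_bound_comp (fun y t => (t - y) ^ (S m) * psi t)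
     (fun _ => 0) (fun r => r) r 0 1) as H.
  eapply isd_eq. apply H.
  - apply filter_forall. intros; apply exRInt_integrand.
  - exists (mkposreal 1 Rlt_0_1). apply filter_forall. intros; apply exRInt_integrand.
  - exists (mkposreal 1 Rlt_0_1). apply filter_forall. intros; apply exRInt_integrand.
  - apply isd_const.
  - apply isd_id.
  - exists (mkposreal 1 Rlt_0_1). apply filter_forall. intros y t _.
    eexists. apply (isd_ext (fun z => psi t * (t - z) ^ (S m))). intro; ring.
    apply is_derive_scal. apply isd_pow_lin2.
  - intros t _. apply Hc2.
  - apply locally_2d_forall. intros; apply Hc2.
  - apply locally_2d_forall. intros; apply Hc2.
  - apply cont_integrand.
  - apply cont_integrand.
  - rewrite Rminus_diag, pow_ne_zero by lia. rewrite Rmult_0_l, Rmult_0_l, Rplus_0_r.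
    rewrite Rmult_0_r, Rplus_0_r.
    transitivity (RInt (fun u => scal (- INR (S m)) ((u - r) ^ m * psi u)) 0 r).
    + apply RInt_ext. intros t _. rewrite Derive_integrand. unfold scal; simpl; unfold mult; simpl; ring.
    + rewrite (RInt_scal (V:=R_CompleteNormedModule)). reflexivity. apply exRInt_integrand.
Qed.

End D.

Definition poly (c : nat -> R) (N : nat) (z : C) : C :=
  Csum (fun v => Cmult (RtoC (c v)) (Cnpow z v)) N.
Definition dpoly (c : nat -> R) (N : nat) (z : C) : C :=
  Csum (fun v => Cmult (RtoC (c v)) (Cmult (RtoC (INR v)) (Cnpow z (pred v)))) N.

Lemma Csum_ext : forall N f g, (forall v, (v <= N)%nat -> f v = g v) -> Csum f N = Csum g N.
Proof.
  induction N; intros f g H; simpl.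
  - apply H; lia.
  - rewrite (IHN f g) by (intros; apply H; lia). rewrite H by lia. reflexivity.
Qed.

Lemma Csum_scal : forall N f a, Csum (fun v => Cmult a (f v)) N = Cmult a (Csum f N).
Proof. induction N; intros f a; simpl; auto. rewrite IHN. ring. Qed.

Lemma Csum_plus : forall N f g, Csum (fun v => Cplus (f v) (g v)) N = Cplus (Csum f N) (Csum g N).
Proof. induction N; intros f g; simpl; auto. rewrite IHN. ring. Qed.

Lemma Csum_shift : forall N f, Csum f (S N) = Cplus (f O) (Csum (fun v => f (S v)) N).
Proof.
  induction N; intros f.
  - simpl. reflexivity.
  - change (Csum f (S (S N))) with (Cplus (Csum f (S N)) (f (S (S N)))).
    rewrite IHN. simpl. ring.
Qed.

Lemma poly_ext : forall c c' N z, (forall v, (v <= N)%nat -> c v = c' v) -> poly c N z = poly c' N z.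
Proof. intros. unfold poly. apply Csum_ext. intros v Hv. rewrite H by auto. reflexivity. Qed.

Lemma poly_euler : forall c N z al,
  Cplus (Cmult (RtoC al) (poly c N z)) (Cmult z (dpoly c N z))
  = poly (fun v => (al + INR v) * c v) N z.
Proof.
  intros. unfold poly, dpoly. rewrite <- !Csum_scal, <- Csum_plus. apply Csum_ext.
  intros v _. destruct v.
  - change (INR 0) with 0. rewrite Rplus_0_r. rewrite RtoC_mult. ring.
  - simpl pred. change (Cnpow z (S v)) with (Cmult z (Cnpow z v)).
    rewrite RtoC_mult, RtoC_plus. ring.
Qed.

Lemma dpoly_shift : forall c M z,
  dpoly c (S M) z = poly (fun v => INR (S v) * c (S v)) M z.
Proof.
  intros. unfold dpoly, poly. rewrite Csum_shift. change (INR 0) with 0.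
  replace (Cmult (RtoC (c 0%nat)) (Cmult (RtoC 0) (Cnpow z (pred 0)))) with (RtoC 0) by ring.
  rewrite Cplus_0_l. apply Csum_ext. intros v _. simpl pred. rewrite RtoC_mult. ring.
Qed.

Lemma dpoly_0 : forall c z, dpoly c 0 z = RtoC 0.
Proof. intros. unfold dpoly. simpl. change (INR 0) with 0. ring. Qed.

Lemma Cnpow_1 : forall v, Cnpow (RtoC 1) v = RtoC 1.
Proof. induction v; simpl; auto. rewrite IHv. ring. Qed.

Lemma poly_one : forall c N, poly c N (RtoC 1) = RtoC (sum_f_R0 c N).
Proof.
  induction N; unfold poly in *; simpl.
  - rewrite Cmult_1_r. reflexivity.
  - rewrite IHN, Cnpow_1, RtoC_plus. ring.
Qed.

Definition cprev (c : nat -> R) (v : nat) : R := match v with O => 0 | S u => c u end.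

Lemma poly_mul_1mz_gen : forall c N z,
  Cmult (Cminus (RtoC 1) z) (poly c N z)
  = Cminus (poly (fun v => c v - cprev c v) N z) (Cmult (RtoC (c N)) (Cnpow z (S N))).
Proof.
  induction N; intros z; unfold poly in *.
  - simpl. rewrite RtoC_minus. ring.
  - change (Csum (fun v => Cmult (RtoC (c v)) (Cnpow z v)) (S N)) with
      (Cplus (Csum (fun v => Cmult (RtoC (c v)) (Cnpow z v)) N) (Cmult (RtoC (c (S N))) (Cnpow z (S N)))).
    change (Csum (fun v => Cmult (RtoC (c v - cprev c v)) (Cnpow z v)) (S N)) with
      (Cplus (Csum (fun v => Cmult (RtoC (c v - cprev c v)) (Cnpow z v)) N) (Cmult (RtoC (c (S N) - cprev c (S N))) (Cnpow z (S N)))).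
    rewrite Cmult_plus_distr_l, IHN. simpl cprev. rewrite RtoC_minus.
    change (Cnpow z (S (S N))) with (Cmult z (Cnpow z (S N))). ring.
Qed.

Lemma binomR_pascal : forall y k, binomR (y + 1) (S k) = binomR y (S k) + binomR y k.
Proof.
  intros y k. unfold binomR. rewrite fallR_head.
  replace (y + 1 - 1) with y by ring. simpl fallR at 2.
  replace (fact (S k)) with (S k * fact k)%nat by reflexivity.
  rewrite mult_INR, S_INR. field. split. apply fact_pos_R. pose proof (pos_INR k). lra.
Qed.

Lemma fallR_nat_over : forall n, fallR (INR n) (S n) = 0.
Proof.
  intro n. simpl fallR. rewrite Rminus_diag. ring.
Qed.

Lemma binomR_nat_over : forall n, binomR (INR n) (S n) = 0.
Proof. intro n. unfold binomR. rewrite fallR_nat_over. unfold Rdiv. ring. Qed.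

Lemma cbinom : forall n z,
  Cnpow (Cminus (RtoC 1) z) n = poly (fun v => (-1) ^ v * binomR (INR n) v) n z.
Proof.
  induction n; intros z.
  - unfold poly. change (Csum (fun v => Cmult (RtoC ((-1) ^ v * binomR (INR 0) v)) (Cnpow z v)) 0)
      with (Cmult (RtoC ((-1) ^ 0 * binomR (INR 0) 0)) (RtoC 1)).
    rewrite binomR_0. simpl. apply injective_projections; simpl; ring.
  - change (Cnpow (Cminus (RtoC 1) z) (S n)) with (Cmult (Cminus (RtoC 1) z) (Cnpow (Cminus (RtoC 1) z) n)).
    rewrite IHn.
    set (c := fun v => (-1) ^ v * binomR (INR n) v).
    assert (Hc : poly c n z = poly c (S n) z).
    { unfold poly. change (Csum (fun v => Cmult (RtoC (c v)) (Cnpow z v)) (S n)) with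
      (Cplus (Csum (fun v => Cmult (RtoC (c v)) (Cnpow z v)) n) (Cmult (RtoC (c (S n))) (Cnpow z (S n)))).
      replace (c (S n)) with 0 by (unfold c; rewrite binomR_nat_over; ring). ring. }
    rewrite Hc, poly_mul_1mz_gen.
    replace (c (S n)) with 0 by (unfold c; rewrite binomR_nat_over; ring). rewrite Cmult_0_l.
    unfold Cminus. rewrite Copp_0, Cplus_0_r.
    apply poly_ext. intros v Hv. unfold c. destruct v.
    + simpl. rewrite !binomR_0. ring.
    + simpl cprev. rewrite S_INR, binomR_pascal. simpl pow. ring.
Qed.

Lemma CD_poly : forall x c N r,
  CD (fun t => poly c N (seg x t)) r (Cmult (Cminus x (RtoC 1)) (dpoly c N (seg x r))).
Proof.
  intros x c N r. unfold poly.
  eapply CD_eq.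
  - apply (CD_Csum N (fun v t => Cmult (RtoC (c v)) (Cnpow (seg x t) v))).
    intro v. apply (CD_mult (fun _ => RtoC (c v)) (fun t => Cnpow (seg x t) v)).
    apply CD_const. apply CD_Cnpow. apply CD_seg.
  - unfold dpoly. rewrite <- Csum_scal. apply Csum_ext. intros v _. ring.
Qed.

Definition clamp (u : R) := Rmax 0 (Rmin 1 u).

Lemma clamp_in : forall u, 0 <= clamp u <= 1.
Proof. intro u. unfold clamp, Rmax, Rmin. repeat destruct Rle_dec; lra. Qed.

Lemma clamp_id : forall u, 0 <= u <= 1 -> clamp u = u.
Proof. intros u H. unfold clamp, Rmax, Rmin. repeat destruct Rle_dec; lra. Qed.

Lemma clamp_lip : forall u v, Rabs (clamp u - clamp v) <= Rabs (u - v).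
Proof.
  intros u v. unfold clamp, Rmax, Rmin. repeat destruct Rle_dec;
  unfold Rabs; repeat destruct Rcase_abs; lra.
Qed.

Lemma clamp_cont : forall u, continuity_pt clamp u.
Proof.
  intros u eps Heps. exists eps. split; auto. intros v [_ Hv].
  simpl in *. unfold R_dist in *. eapply Rle_lt_trans. apply clamp_lip. auto.
Qed.

Lemma Dm_ext : forall f g m r, (forall u, f u = g u) -> Dm f m r = Dm g m r.
Proof. intros. unfold Dm. apply RInt_ext. intros. rewrite H. auto. Qed.

Lemma Dm_lin : forall f g c1 c2 m r, (forall u, continuity_pt f u) -> (forall u, continuity_pt g u) ->
  Dm (fun u => c1 * f u + c2 * g u) m r = c1 * Dm f m r + c2 * Dm g m r.
Proof.
  intros f g c1 c2 m r Hf Hg. unfold Dm.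
  transitivity (RInt (fun u => plus (scal c1 ((u - r) ^ m * f u)) (scal c2 ((u - r) ^ m * g u))) 0 r).
  { apply RInt_ext. intros. unfold plus, scal; simpl; unfold mult; simpl. ring. }
  rewrite (RInt_plus (V:=R_CompleteNormedModule)).
  - rewrite !(RInt_scal (V:=R_CompleteNormedModule)). reflexivity.
    apply exRInt_integrand; auto. apply exRInt_integrand; auto.
  - apply (ex_RInt_scal (V:=R_CompleteNormedModule)). apply exRInt_integrand; auto.
  - apply (ex_RInt_scal (V:=R_CompleteNormedModule)). apply exRInt_integrand; auto.
Qed.

Lemma Dm_at0 : forall f m, Dm f m 0 = 0.
Proof. intros. unfold Dm. apply (RInt_point (V:=R_CompleteNormedModule)). Qed.

Lemma CD_cont1 : forall f r l, CD f r l -> continuity_pt (fun t => fst (f t)) r.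
Proof. intros f r l [H1 _]. eapply isd_cont; eauto. Qed.
Lemma CD_cont2 : forall f r l, CD f r l -> continuity_pt (fun t => snd (f t)) r.
Proof. intros f r l [_ H2]. eapply isd_cont; eauto. Qed.

Lemma real_uniq : forall (h : R -> R), (forall r, 0 <= r <= 1 -> is_derive h r 0) ->
  forall r, 0 <= r <= 1 -> h r = h 0.
Proof.
  intros h H r Hr.
  destruct (MVT_gen h 0 r (fun _ => 0)) as [c [_ Hc]].
  - intros y Hy. apply H. unfold Rmin, Rmax in Hy. destruct Rle_dec; lra.
  - intros y Hy. eapply isd_cont. apply H. unfold Rmin, Rmax in Hy. destruct Rle_dec; lra.
  - lra.
Qed.

Lemma C_uniq : forall f g : R -> C, (forall r, 0 <= r <= 1 -> exists d, CD f r d /\ CD g r d) ->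
  f 0 = g 0 -> forall r, 0 <= r <= 1 -> f r = g r.
Proof.
  intros f g H H0 r Hr.
  assert (E1 : fst (f r) - fst (g r) = fst (f 0) - fst (g 0)).
  { apply (real_uniq (fun t => fst (f t) - fst (g t))); auto.
    intros s Hs. destruct (H s Hs) as [d [[A1 A2] [B1 B2]]].
    eapply isd_eq. apply (isd_minus _ _ _ _ _ A1 B1). ring. }
  assert (E2 : snd (f r) - snd (g r) = snd (f 0) - snd (g 0)).
  { apply (real_uniq (fun t => snd (f t) - snd (g t))); auto.
    intros s Hs. destruct (H s Hs) as [d [[A1 A2] [B1 B2]]].
    eapply isd_eq. apply (isd_minus _ _ _ _ _ A2 B2). ring. }
  rewrite H0 in E1, E2. apply injective_projections; lra.
Qed.

Section Main.
Variables (x : C) (n : nat) (be : R).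
Hypothesis Hg : forall s, 0 <= s <= 1 -> good (seg x s).

Definition ww := Cminus x (RtoC 1).
Definition al (m : nat) := be + INR m + 1.

Definition Gam (m : nat) (u : R) : C :=
  Cmult (Cnpow ww m) (Cmult (Cmult (Cnpow (Cminus (RtoC 1) (seg x u)) n) (Cpowr (seg x u) be)) ww).

Lemma CD_Gam : forall m u, 0 <= u <= 1 -> exists l, CD (Gam m) u l.
Proof.
  intros m u Hu. eexists. unfold Gam.
  apply (CD_mult (fun _ => Cnpow ww m)
           (fun t => Cmult (Cmult (Cnpow (Cminus (RtoC 1) (seg x t)) n) (Cpowr (seg x t) be)) ww)).
  apply CD_const.
  apply (CD_mult (fun t => Cmult (Cnpow (Cminus (RtoC 1) (seg x t)) n) (Cpowr (seg x t) be)) (fun _ => ww)).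
  2: apply CD_const.
  apply (CD_mult (fun t => Cnpow (Cminus (RtoC 1) (seg x t)) n) (fun t => Cpowr (seg x t) be)).
  - apply (CD_Cnpow n (fun t => Cminus (RtoC 1) (seg x t))).
    apply (CD_minus (fun _ => RtoC 1) (seg x)). apply CD_const. apply CD_seg.
  - apply CD_Cpowr. apply Hg. auto.
Qed.

Definition psr (m : nat) (u : R) := fst (Gam m (clamp u)).
Definition psi' (m : nat) (u : R) := snd (Gam m (clamp u)).

Lemma psr_cont : forall m u, continuity_pt (psr m) u.
Proof.
  intros m u. unfold psr.
  apply (continuity_pt_comp clamp (fun t => fst (Gam m t))). apply clamp_cont.
  destruct (CD_Gam m (clamp u) (clamp_in u)) as [l Hl]. eapply CD_cont1; eauto.
Qed.

Lemma psi'_cont : forall m u, continuity_pt (psi' m) u.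
Proof.
  intros m u. unfold psi'.
  apply (continuity_pt_comp clamp (fun t => snd (Gam m t))). apply clamp_cont.
  destruct (CD_Gam m (clamp u) (clamp_in u)) as [l Hl]. eapply CD_cont2; eauto.
Qed.

Definition J (m : nat) (r : R) : C := (Dm (psr m) m r, Dm (psi' m) m r).

Lemma CD_J0 : forall r, 0 <= r <= 1 -> CD (J 0) r (Gam 0 r).
Proof.
  intros r Hr. split; simpl.
  - eapply isd_eq. apply (Dm_deriv0 (psr 0) (psr_cont 0)). unfold psr. rewrite clamp_id; auto.
  - eapply isd_eq. apply (Dm_deriv0 (psi' 0) (psi'_cont 0)). unfold psi'. rewrite clamp_id; auto.
Qed.

Lemma Gam_S : forall k u, Gam (S k) u = Cmult ww (Gam k u).
Proof. intros. unfold Gam. simpl Cnpow. ring. Qed.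

Lemma CD_JS : forall k r, CD (J (S k)) r (Cmult (RtoC (- INR (S k))) (Cmult ww (J k r))).
Proof.
  intros k r.
  assert (H1 : forall u, psr (S k) u = fst ww * psr k u + (- snd ww) * psi' k u).
  { intro u. unfold psr, psi'. rewrite Gam_S. simpl. ring. }
  assert (H2 : forall u, psi' (S k) u = snd ww * psr k u + fst ww * psi' k u).
  { intro u. unfold psr, psi'. rewrite Gam_S. simpl. ring. }
  split; simpl.
  - eapply isd_eq. apply (Dm_derivS (psr (S k)) (psr_cont (S k))).
    rewrite (Dm_ext _ _ _ _ H1), Dm_lin by (apply psr_cont || apply psi'_cont). unfold J; simpl. ring.
  - eapply isd_eq. apply (Dm_derivS (psi' (S k)) (psi'_cont (S k))).
    rewrite (Dm_ext _ _ _ _ H2), Dm_lin by (apply psr_cont || apply psi'_cont). unfold J; simpl. ring.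
Qed.

Definition cq (m : nat) (v : nat) := binomR (INR m - al m) v * binomR (INR n + al m) (n - v).
Definition cp (m : nat) (v : nat) := binomR (INR m - al m) (m - v) * binomR (INR n + al m) v.

Definition Em (m : nat) (r : R) : C :=
  Cminus (Cmult (Cpowr (seg x r) (al m)) (q_poly m n (al m) (seg x r))) (p_poly m n (al m) (seg x r)).

Lemma Em_poly : forall m r, Em m r =
  Cminus (Cmult (Cpowr (seg x r) (al m)) (poly (cq m) n (seg x r))) (poly (cp m) m (seg x r)).
Proof. reflexivity. Qed.

Lemma CD_Em : forall m r, 0 <= r <= 1 ->
  CD (Em m) r (Cmult ww (Cminus (Cmult (Cpowr (seg x r) (al m - 1))
                     (poly (fun v => (al m + INR v) * cq m v) n (seg x r)))
                     (dpoly (cp m) m (seg x r)))).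
Proof.
  intros m r Hr.
  pose proof (Cpowr_succ (seg x r) (al m - 1) (Hg r Hr)) as HP.
  replace (al m - 1 + 1) with (al m) in HP by ring.
  apply (CD_ext (fun t => Cminus (Cmult (Cpowr (seg x t) (al m)) (poly (cq m) n (seg x t))) (poly (cp m) m (seg x t)))).
  { intro t. reflexivity. }
  eapply CD_eq.
  - apply (CD_minus (fun t => Cmult (Cpowr (seg x t) (al m)) (poly (cq m) n (seg x t)))
                    (fun t => poly (cp m) m (seg x t))).
    + apply (CD_mult (fun t => Cpowr (seg x t) (al m)) (fun t => poly (cq m) n (seg x t))).
      apply CD_Cpowr. apply Hg; auto. apply CD_poly.
    + apply CD_poly.
  - rewrite <- poly_euler. rewrite HP. unfold ww. ring.
Qed.

Lemma poly_scal : forall a c N z, poly (fun v => a * c v) N z = Cmult (RtoC a) (poly c N z).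
Proof. intros. unfold poly. rewrite <- Csum_scal. apply Csum_ext. intros. rewrite RtoC_mult. ring. Qed.

Definition Km (m : nat) := al m * binomR (INR m - al m) m * binomR (INR n + al m) n.

Lemma dEm_S : forall k r,
  Cmult ww (Cminus (Cmult (Cpowr (seg x r) (al (S k) - 1))
                     (poly (fun v => (al (S k) + INR v) * cq (S k) v) n (seg x r)))
                     (dpoly (cp (S k)) (S k) (seg x r)))
  = Cmult ww (Cmult (RtoC (INR n + al (S k))) (Em k r)).
Proof.
  intros k r. rewrite dpoly_shift.
  replace (al (S k) - 1) with (al k) by (unfold al; rewrite S_INR; ring).
  rewrite (poly_ext (fun v => (al (S k) + INR v) * cq (S k) v) (fun v => (INR n + al (S k)) * cq k v)).
  rewrite (poly_ext (fun v => INR (S v) * cp (S k) (S v)) (fun v => (INR n + al (S k)) * cp k v)).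
  - rewrite !poly_scal, Em_poly. ring.
  - intros v Hv. unfold cp. simpl minus.
    replace (INR (S k) - al (S k)) with (INR k - al k) by (unfold al; rewrite S_INR; ring).
    replace (INR n + al k) with (INR n + al (S k) - 1) by (unfold al; rewrite S_INR; ring).
    transitivity (binomR (INR k - al k) (k - v) * (INR (S v) * binomR (INR n + al (S k)) (S v))).
    replace (S k - S v)%nat with (k - v)%nat by lia. ring. rewrite binomR_B2. ring.
  - intros v Hv. unfold cq.
    replace (INR (S k) - al (S k)) with (INR k - al k) by (unfold al; rewrite S_INR; ring).
    replace (INR n + al k) with (INR n + al (S k) - 1) by (unfold al; rewrite S_INR; ring).
    transitivity (binomR (INR k - al k) v * ((INR n + al (S k) - INR (n - v)) * binomR (INR n + al (S k)) (n - v))).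
    { rewrite minus_INR by lia. ring. }
    rewrite binomR_B3. ring.
Qed.

Lemma dEm_0 : forall r,
  Cmult ww (Cminus (Cmult (Cpowr (seg x r) (al 0 - 1))
                     (poly (fun v => (al 0 + INR v) * cq 0 v) n (seg x r)))
                     (dpoly (cp 0) 0 (seg x r)))
  = Cmult (RtoC (Km 0)) (Gam 0 r).
Proof.
  intros r. rewrite dpoly_0.
  replace (al 0 - 1) with be by (unfold al; simpl; ring).
  set (Y := INR n + al 0).
  rewrite (poly_ext (fun v => (al 0 + INR v) * cq 0 v)
              (fun v => (Y * binomR (Y - 1) n) * ((-1) ^ v * binomR (INR n) v))).
  - rewrite poly_scal, <- cbinom.
    replace (Km 0) with (Y * binomR (Y - 1) n).
    + unfold Gam. simpl Cnpow. ring.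
    + unfold Km, Y. rewrite binomR_0, <- binomR_B3. simpl INR. ring.
  - intros v Hv. unfold cq. fold Y.
    replace (INR 0 - al 0) with (- al 0) by (simpl; ring).
    transitivity (binomR (- al 0) v * ((Y - INR (n - v)) * binomR Y (n - v))).
    { rewrite minus_INR by lia. unfold Y. ring. }
    rewrite binomR_B3.
    replace (Y - 1) with (INR n + al 0 - 1) by (unfold Y; ring).
    transitivity (Y * (binomR (- al 0) v * binomR (INR n + al 0 - 1) (n - v))). ring.
    rewrite base_coef by auto. rewrite binomR_nat by auto. ring.
Qed.

Lemma Kstep : forall k, (INR n + al (S k)) * Km k = - INR (S k) * Km (S k).
Proof.
  intros k. unfold Km.
  transitivity (- al (S k) * binomR (INR n + al (S k)) n *
                (INR (S k) * binomR (INR (S k) - al (S k)) (S k))); [|ring].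
  rewrite binomR_B5.
  replace (INR (S k) - al (S k)) with (INR k - al k) by (unfold al; rewrite S_INR; ring).
  replace (INR k - al k - INR k) with (- al k) by ring.
  transitivity (al k * binomR (INR k - al k) k * ((INR n + al (S k) - INR n) * binomR (INR n + al (S k)) n)).
  2: { replace (INR n + al (S k) - INR n) with (al (S k)) by ring. ring. }
  rewrite binomR_B3.
  replace (INR n + al (S k) - 1) with (INR n + al k) by (unfold al; rewrite S_INR; ring). ring.
Qed.

Lemma seg0 : seg x 0 = RtoC 1.
Proof. unfold seg. apply injective_projections; simpl; ring. Qed.

Lemma Cpowr_1 : forall a, Cpowr (RtoC 1) a = RtoC 1.
Proof.
  intro a. unfold Cpowr, Cmod, Arg, Re, Im. simpl.
  replace (1 * (1 * 1) + 0 * (0 * 1)) with 1 by ring. rewrite sqrt_1, ln_1.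
  destruct (Rlt_dec 0 1); [|lra]. unfold Rdiv. rewrite Rmult_0_l, atan_0.
  rewrite !Rmult_0_r, exp_0, cos_0, sin_0. apply injective_projections; simpl; ring.
Qed.

Lemma Em_at0 : forall m, Em m 0 = RtoC 0.
Proof.
  intro m. rewrite Em_poly, seg0, Cpowr_1, !poly_one.
  assert (H1 : sum_f_R0 (cq m) n = binomR (INR (m + n)) n).
  { unfold cq. rewrite vandermonde. f_equal. rewrite plus_INR. ring. }
  assert (H2 : sum_f_R0 (cp m) m = binomR (INR (m + n)) m).
  { unfold cp. transitivity (sum_f_R0 (fun v => binomR (INR n + al m) v * binomR (INR m - al m) (m - v)) m).
    apply sum_eq; intros; ring.
    rewrite vandermonde. f_equal. rewrite plus_INR. ring. }
  rewrite H1, H2. rewrite (binomR_sym (m + n) n) by lia.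
  replace (m + n - n)%nat with m by lia. ring.
Qed.

Lemma J_at0 : forall m, J m 0 = RtoC 0.
Proof. intro m. unfold J. rewrite !Dm_at0. reflexivity. Qed.

Lemma main_claim : forall m r, 0 <= r <= 1 -> Em m r = Cmult (RtoC (Km m)) (J m r).
Proof.
  induction m.
  - apply C_uniq.
    + intros r Hr. exists (Cmult (RtoC (Km 0)) (Gam 0 r)). split.
      * eapply CD_eq. apply CD_Em; auto. apply dEm_0.
      * eapply CD_eq. apply (CD_mult (fun _ => RtoC (Km 0)) (J 0)). apply CD_const. apply CD_J0; auto.
        ring.
    + rewrite Em_at0, J_at0. ring.
  - apply C_uniq.
    + intros r Hr. exists (Cmult ww (Cmult (RtoC (INR n + al (S m))) (Cmult (RtoC (Km m)) (J m r)))). split.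
      * eapply CD_eq. apply CD_Em; auto. rewrite dEm_S, IHm by auto. reflexivity.
      * eapply CD_eq. apply (CD_mult (fun _ => RtoC (Km (S m))) (J (S m))). apply CD_const. apply CD_JS.
        transitivity (Cmult ww (Cmult (RtoC (- INR (S m) * Km (S m))) (J m r))).
        -- rewrite RtoC_mult. ring.
        -- rewrite <- Kstep, RtoC_mult. ring.
    + rewrite Em_at0, J_at0. ring.
Qed.

End Main.

Lemma good_of : forall x, (forall s : R, 0 <= s <= 1 -> seg x s <> RtoC 0) ->
  forall s, 0 <= s <= 1 -> good (seg x s).
Proof.
  intros x H s Hs. unfold good. 
  assert (Hf : forall t, fst (seg x t) = 1 + t * (fst x - 1)) by (intro; unfold seg; simpl; ring).
  assert (Hs' : forall t, snd (seg x t) = t * snd x) by (intro; unfold seg; simpl; ring).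
  rewrite Hf, Hs'.
  destruct (Req_dec (snd x) 0) as [H0|H0].
  - left. destruct (Rlt_dec 0 (1 + s * (fst x - 1))) as [Hp|Hp]; auto. exfalso.
    assert (Hx : fst x < 1) by nra.
    set (s' := 1 / (1 - fst x)).
    assert (Hs1 : 0 < s') by (unfold s'; apply Rdiv_lt_0_compat; lra).
    assert (Hs2 : s' <= s).
    { unfold s'. apply (Rmult_le_reg_r (1 - fst x)). lra. field_simplify; nra. }
    apply (H s'). lra.
    apply injective_projections; rewrite ?Hf, ?Hs'; simpl.
    + unfold s'. field. lra.
    + rewrite H0. ring.
  - destruct (Req_dec s 0) as [E|E].
    + left. subst. lra.
    + right. intro C0. apply Rmult_integral in C0. tauto.
Qed.

Lemma Cnpow_mult : forall k a b, Cnpow (Cmult a b) k = Cmult (Cnpow a k) (Cnpow b k).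
Proof. induction k; intros; simpl. ring. rewrite IHk. ring. Qed.

Lemma Cnpow_RtoC : forall k t, Cnpow (RtoC t) k = RtoC (t ^ k).
Proof. induction k; intros; simpl. reflexivity. rewrite IHk, RtoC_mult. reflexivity. Qed.

Lemma seg1 : forall x, seg x 1 = x.
Proof. intro x. unfold seg. apply injective_projections; simpl; ring. Qed.

Lemma C_eq_helper : forall u v : C, fst u = fst v -> snd u = snd v -> u = v.
Proof. intros. apply injective_projections; auto. Qed.

Lemma J_seg : forall x n m be, (forall s, 0 <= s <= 1 -> good (seg x s)) ->
  J x n be m 1 = seg_integral
         (fun t => Cmult (Cmult (Cnpow (Cminus t x) m) (Cnpow (Cminus (RtoC 1) t) n))
                         (Cpowr t be)) x.
Proof.
  intros x n m be Hg. unfold seg_integral. symmetry.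
  apply (is_RInt_unique (V:=C_R_CompleteNormedModule)).
  apply (is_RInt_ext (V := C_R_NormedModule) (fun s => ((s - 1) ^ m * psr x n be m s, (s - 1) ^ m * psi' x n be m s))).
  - intros s Hs. rewrite Rmin_left, Rmax_right in Hs by lra.
    unfold psr, psi'. rewrite clamp_id by lra.
    transitivity (Cmult (RtoC ((s - 1) ^ m)) (Gam x n be m s)).
    { apply C_eq_helper; simpl; ring. }
    unfold Gam, ww.
    replace (Cminus (seg x s) x) with (Cmult (RtoC (s - 1)) (Cminus x (RtoC 1)))
      by (unfold seg; apply injective_projections; simpl; ring).
    rewrite Cnpow_mult, Cnpow_RtoC. match goal with |- ?a = ?b => change (@eq C a b) end. ring.
  - apply is_RInt_fct_extend_pair; simpl.
    + apply (RInt_correct (V:=R_CompleteNormedModule)).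
      apply exRInt_integrand. apply psr_cont. auto.
    + apply (RInt_correct (V:=R_CompleteNormedModule)).
      apply exRInt_integrand. apply psi'_cont. auto.
Qed.

Theorem lemma2p2 (m n : nat) (alpha : R) (x : C) :
  (0 < m)%nat -> (0 < n)%nat ->
  (forall s : R, 0 <= s <= 1 -> seg x s <> RtoC 0) ->
  Cminus (Cmult (Cpowr x alpha) (q_poly m n alpha x)) (p_poly m n alpha x)
  = Cmult (RtoC (alpha * binomR (INR m - alpha) m * binomR (INR n + alpha) n))
      (seg_integral
         (fun t => Cmult (Cmult (Cnpow (Cminus t x) m) (Cnpow (Cminus (RtoC 1) t) n))
                         (Cpowr t (alpha - INR m - 1)))
         x).
Proof.
  intros Hm Hn Hz.
  pose proof (good_of x Hz) as Hg.
  pose proof (main_claim x n (alpha - INR m - 1) Hg m 1 ltac:(lra)) as H.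
  assert (Hal : al (alpha - INR m - 1) m = alpha) by (unfold al; ring).
  unfold Em, Km in H. rewrite Hal, seg1 in H. rewrite H.
  rewrite J_seg by exact Hg. reflexivity.
Qed.
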